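(* Let $X$ be a random variable on $\{0,1\}^n$ and $Y$ uniform on $[n]$, independent of $X$. Suppose the statistical distance between the joint distribution of $(X_Y,Y)$ and that of $(U_1,Y)$ (with $U_1$ a uniform bit independent of $Y$) exceeds $\delta$. Then there exists $\alpha\in\{0,1\}^n$ with $$\Pr\Big[d(X,\alpha)\le\tfrac12-\tfrac{\delta}{2}\Big]>\delta,$$ where $d(\cdot,\cdot)$ is the relative Hamming distance.
   Context: $X_Y$ denotes the $Y$-th bit of $X$. The relative Hamming distance between $u,v\in\{0,1\}^n$ is $\frac1n|\{j:u_j\ne v_j\}|$. The statistical distance of two distributions $P,Q$ is $\frac12\sum_w|P(w)-Q(w)|$. *)

(* Defs.v *)
From HB Require Import structures.
From mathcomp Require Import all_boot all_order all_algebra.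
Set Implicit Arguments. Unset Strict Implicit. Unset Printing Implicit Defensive.
Import Order.TTheory GRing.Theory Num.Theory.
Local Open Scope ring_scope.

Notation bitvec n := {ffun 'I_n -> bool}.

Definition is_distr (R : realFieldType) (T : finType) (p : T -> R) : Prop :=
  (forall t, 0 <= p t) /\ \sum_(t : T) p t = 1.

Definition prob (R : realFieldType) (T : finType) (p : T -> R) (E : pred T) : R :=
  \sum_(t : T | E t) p t.

Definition stat_dist (R : realFieldType) (T : finType) (P Q : T -> R) : R :=
  2^-1 * \sum_(w : T) `|P w - Q w|.

Definition rel_hamming (R : realFieldType) (n : nat) (u v : bitvec n) : R :=
  (#|[set j : 'I_n | u j != v j]|)%:R / n%:R.

(* Joint distribution of (X_Y, Y) with X ~ pX on {0,1}^n, Y uniform on [n]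
   independent of X: Pr[X_Y = b, Y = i] = (1/n) Pr[X_i = b]. *)
Definition joint_XY_Y (R : realFieldType) (n : nat) (pX : bitvec n -> R)
  (w : bool * 'I_n) : R :=
  n%:R^-1 * prob pX (fun x => x w.2 == w.1).

Definition joint_U_Y (R : realFieldType) (n : nat) (w : bool * 'I_n) : R :=
  2^-1 * n%:R^-1.

(* Main.v *)
Require Import Defs.
From HB Require Import structures.
From mathcomp Require Import all_boot all_order all_algebra.
Import Order.TTheory GRing.Theory Num.Theory.
Local Open Scope ring_scope.

Lemma half_core (R : realFieldType) (c : R) : c <= 1 - c ->
  c = 2^-1 - 2^-1 * (`|1 - c - 2^-1| + `|c - 2^-1|).
Proof.
move=> h.
have h2 : (2 : R) != 0 by rewrite pnatr_eq0.
have hc : c <= 2^-1.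
  have : c + c <= 1 by rewrite lerBrDr in h.
  rewrite -mulr2n -[c *+ 2]mulr_natr => H.
  by rewrite -(ler_pM2r (_ : 0 < (2:R))) // mulVf.
have e1 : `|c - 2^-1| = 2^-1 - c by rewrite distrC ger0_norm // subr_ge0.
have e2 : 1 - c - 2^-1 = 2^-1 - c.
  have one : (1 : R) = 2^-1 + 2^-1.
    by rewrite -mulr2n -[_ *+ 2]mulr_natr mulVf.
  rewrite addrAC; congr (_ - c); apply/eqP; rewrite subr_eq; apply/eqP; exact one.
rewrite e2 e1 (ger0_norm (_ : 0 <= 2^-1 - c)) ?subr_ge0 // -mulr2n -[(2^-1 - c) *+ 2]mulr_natl mulrA mulVf // mul1r.
by rewrite subKr.
Qed.

Theorem mainTheorem14 (R : realFieldType) (n : nat) (pX : bitvec n -> R)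
  (delta : R) :
  (0 < n)%N ->
  is_distr pX ->
  stat_dist (joint_XY_Y pX) (@joint_U_Y R n) > delta ->
  exists alpha : bitvec n,
    prob pX (fun x => @rel_hamming R n x alpha <= 2^-1 - delta / 2) > delta.
Proof.
move=> n0 [p0 p1] hSD.
set P := fun (b : bool) (j : 'I_n) => prob pX (fun x => x j == b).
have PTF : forall j, P true j = 1 - P false j.
  move=> j; rewrite -p1 (bigID (fun x : bitvec n => x j == true)) /=.
  have -> : \sum_(x : bitvec n | ~~ (x j == true)) pX x = P false j.
    by apply: eq_bigl => x; case: (x j).
  by rewrite addrK.
have PFT : forall j, P false j = 1 - P true j by move=> j; rewrite PTF subKr.
set alpha : bitvec n := [ffun j => P false j <= P true j].
set Q := fun j => `|P true j - 2^-1| + `|P false j - 2^-1|.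
have core : forall j, P (~~ alpha j) j = 2^-1 - 2^-1 * Q j.
  move=> j; rewrite /Q ffunE.
  case: leP => h /=.
  - have h' : P false j <= 1 - P false j by rewrite -PTF.
    by rewrite {1}(@half_core _ _ h') -PTF.
  - have h' : P true j <= 1 - P true j by rewrite -PFT ltW.
    by rewrite {1}(@half_core _ _ h') -PFT [X in _ * X]addrC.
have hn : (n%:R : R) != 0 by rewrite pnatr_eq0 -lt0n.
set E := \sum_x pX x * rel_hamming R x alpha.
have EQ : E = 2^-1 - stat_dist (joint_XY_Y pX) (@joint_U_Y R n).
  have E1 : E = n%:R^-1 * \sum_j P (~~ alpha j) j.
    rewrite /E [RHS]mulr_sumr /P /prob.
    under [RHS]eq_bigr => j _ do rewrite big_mkcond mulr_sumr.
    rewrite [RHS]exchange_big /=; apply: eq_bigr => x _.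
    rewrite /rel_hamming -sum1_card natr_sum big_mkcond /= mulr_suml mulr_sumr.
    apply: eq_bigr => j _.
    rewrite inE; case: (x j); case: (alpha j) => /=;
      by rewrite ?mul0r ?mulr0 ?mul1r // mulrC.
  have S1 : stat_dist (joint_XY_Y pX) (@joint_U_Y R n)
            = 2^-1 * (n%:R^-1 * \sum_j Q j).
    rewrite /stat_dist /joint_XY_Y /joint_U_Y; congr (_ * _).
    under eq_bigr => w _ do rewrite [_ * n%:R^-1]mulrC -mulrBr normrM
       (ger0_norm (_ : 0 <= n%:R^-1)) ?invr_ge0 ?ler0n //.
    rewrite -mulr_sumr; congr (_ * _).
    rewrite -(pair_big xpredT xpredT (fun b j => `|P b j - 2^-1|)) /=.
    by rewrite big_bool /= -big_split.
  rewrite E1 S1.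
  under eq_bigr => j _ do rewrite core.
  rewrite sumrB sumr_const card_ord -mulr_sumr mulrBr.
  rewrite -[2^-1 *+ n]mulr_natr [n%:R^-1 * (2^-1 * n%:R)]mulrCA mulVf // mulr1.
  by rewrite [n%:R^-1 * (2^-1 * _)]mulrCA.
have E0 : 0 <= E.
  apply: sumr_ge0 => x _; apply: mulr_ge0 => //.
  by rewrite /rel_hamming divr_ge0 ?ler0n.
set t := 2^-1 - delta / 2.
set good := fun x => rel_hamming R x alpha <= t.
exists alpha.
rewrite ltNge; apply/negP => hle.
have hd : delta <= 1.
  apply: (le_trans (ltW hSD)).
  apply: (le_trans (_ : _ <= 2^-1)).
    by rewrite -subr_ge0 -EQ.
  by rewrite invf_le1 ?ler1n ?ltr0n.
have ht : t = 2^-1 * (1 - delta).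
  by rewrite /t mulrBr mulr1 mulrC.
have t0 : 0 <= t.
  rewrite ht; apply: mulr_ge0; by rewrite ?invr_ge0 ?ler0n ?subr_ge0.
have split1 : E = \sum_(x | good x) pX x * rel_hamming R x alpha
                 + \sum_(x | ~~ good x) pX x * rel_hamming R x alpha.
  by rewrite /E (bigID good).
have L1 : t * (1 - prob pX good) <= E.
  rewrite split1.
  set A := \sum_(x | good x) _; set B := \sum_(x | ~~ good x) _.
  apply: (@le_trans _ _ B); last first.
    rewrite lerDr /A.
    by apply: sumr_ge0 => x _; apply: mulr_ge0 => //; rewrite /rel_hamming divr_ge0 ?ler0n.
  have -> : 1 - prob pX good = \sum_(x | ~~ good x) pX x.
    by rewrite -p1 /prob (bigID good) /= addrC addrK.
  rewrite mulr_sumr; apply: ler_sum => x hx.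
  rewrite mulrC; apply: ler_wpM2l => //.
  by rewrite ltW // ltNge.
have L2 : t * (1 - delta) <= t * (1 - prob pX good).
  by apply: ler_wpM2l => //; rewrite lerB.
have L3 : 2^-1 - delta <= t * (1 - delta).
  rewrite ht.
  rewrite -mulrA -expr2 sqrrB expr1n mul1r.
  have -> : 2^-1 - delta = 2^-1 * (1 - delta *+ 2).
    by rewrite mulrBr mulr1 -[delta *+ 2]mulr_natl mulrA mulVf ?pnatr_eq0 // mul1r.
  by apply: ler_wpM2l; rewrite ?invr_ge0 ?ler0n // lerDl sqr_ge0.
have : 2^-1 - delta <= E by apply: (le_trans L3 (le_trans L2 L1)).
rewrite EQ lerD2l lerN2 leNgt.
by move/negP.
Qed.
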